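(* Let $n$ and $\rho$ be positive integers with $\rho<n$, let $q$ be a prime power with $q\geq n-1$, and let ${\cal C}$ be a linear $[n,n-\rho,\rho+1]_q$ MDS code over $\mathbb{F}_q$. Define the code over graphs $$\mathcal{C}_{{\cal G}_1}=\Big\{G=(V_n,L)\ \Big|\ {\boldsymbol c}_{N_m^{\mathrm{in}}}\in{\cal C}\ \text{for all } m\in[n-\rho],\ \text{and}\ {\boldsymbol c}_{N_\ell^{\mathrm{out}}}\in{\cal C}\ \text{for all } \ell\in[n]\Big\}.$$ Then $\mathcal{C}_{{\cal G}_1}$ is a linear code over graphs over $\mathbb{F}_q$ of dimension $k_{\cal G}=(n-\rho)^2$ (i.e., it contains $q^{(n-\rho)^2}$ graphs), and it is a $\rho$-node-erasure-correcting code.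
   Context: For an integer $n>0$, $[n]=\{0,1,\ldots,n-1\}$. $V_n=\{v_0,\ldots,v_{n-1}\}$. A graph $G=(V_n,L)$ over $\mathbb{F}_q$ is a complete directed graph with self loops, i.e., edge set $V_n\times V_n$, together with a labeling $L:V_n\times V_n\to\mathbb{F}_q$. A code over graphs is a set of such graphs; it is linear if it is closed under $\mathbb{F}_q$-linear combinations of labelings, and its dimension is $\log_q$ of its size. For $i\in[n]$, $N_i^{\mathrm{out}}=\{(v_i,v_j)\mid j\in[n]\}$ and $N_i^{\mathrm{in}}=\{(v_j,v_i)\mid j\in[n]\}$. For a set of edges $U$, ${\boldsymbol c}_U\in\mathbb{F}_q^{|U|}$ is the vector of labels of the edges in $U$ listed in lexicographic order of the edges. A failure of node $i$ is the erasure of the labels of all edges in $N_i^{\mathrm{out}}\cup N_i^{\mathrm{in}}$ (the failed node indices are known). A code over graphs is $\rho$-node-erasure-correcting if for every graph in the code and every set of $\rho$ failed nodes, the erased labels are uniquely determined by the remaining labels (given the code). *)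

(* Defs.v *)
From HB Require Import structures.
From mathcomp Require Import all_boot all_order all_algebra finalg.
Set Implicit Arguments. Unset Strict Implicit. Unset Printing Implicit Defensive.
Import GRing.Theory.
Local Open Scope ring_scope.

Definition wt (F : finFieldType) (n : nat) (c : 'rV[F]_n) : nat :=
  #|[set j : 'I_n | c 0 j != 0]|.

Definition linear_code (F : finFieldType) (n : nat) (C : {set 'rV[F]_n}) : Prop :=
  0 \in C /\ forall (a : F) (x y : 'rV[F]_n), x \in C -> y \in C -> a *: x + y \in C.

Definition min_dist (F : finFieldType) (n : nat) (C : {set 'rV[F]_n}) (d : nat) : Prop :=
  (forall c, c \in C -> c != 0 -> (d <= wt c)%N) /\
  (exists2 c, c \in C & (c != 0) && (wt c == d)).

Definition lin_code_nkd (F : finFieldType) (n k d : nat) (C : {set 'rV[F]_n}) : Prop :=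
  [/\ linear_code C, #|C| = (#|F| ^ k)%N & min_dist C d].

(* A graph G = (V_n, L) over F is represented by its labeling matrix L,
   with L i j the label of the edge (v_i, v_j). *)
Definition graph_code_linear (F : finFieldType) (n : nat) (S : {set 'M[F]_n}) : Prop :=
  0 \in S /\ forall (a : F) (L1 L2 : 'M[F]_n), L1 \in S -> L2 \in S -> a *: L1 + L2 \in S.

Definition c_out (F : finFieldType) (n : nat) (L : 'M[F]_n) (i : 'I_n) : 'rV[F]_n := row i L.
Definition c_in (F : finFieldType) (n : nat) (L : 'M[F]_n) (i : 'I_n) : 'rV[F]_n := (col i L)^T.

Definition node_erasure_correcting (F : finFieldType) (n : nat) (S : {set 'M[F]_n})
  (rho : nat) : Prop :=
  forall (R : {set 'I_n}), #|R| = rho ->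
  forall L1 L2, L1 \in S -> L2 \in S ->
    (forall i j : 'I_n, i \notin R -> j \notin R -> L1 i j = L2 i j) -> L1 = L2.

Definition code_G1 (F : finFieldType) (n rho : nat) (C : {set 'rV[F]_n}) : {set 'M[F]_n} :=
  [set L : 'M[F]_n | [forall m : 'I_n, ((m < n - rho)%N ==> (c_in L m \in C))]
                     && [forall l : 'I_n, c_out L l \in C]].

(* Main.v *)
Require Import Defs.
From mathcomp Require Import all_boot all_order all_algebra finalg.
From mathcomp Require Import zify.
Import GRing.Theory.
Local Open Scope ring_scope.

Lemma info (F : finFieldType) (n rho : nat) (C : {set 'rV[F]_n}) (S : {set 'I_n}) :
  lin_code_nkd (n - rho) (rho + 1) C -> (n - rho <= #|S|)%N ->
  forall c1 c2, c1 \in C -> c2 \in C -> (forall j, j \in S -> c1 0 j = c2 0 j) -> c1 = c2.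
Proof.
case=> [[C0 Clin] _ [mind _]] HS c1 c2 h1 h2 eq.
have hd : c1 - c2 \in C by have := Clin (-1) c2 c1 h2 h1; rewrite scaleN1r addrC.
apply/eqP; rewrite -subr_eq0; apply/negPn/negP => nz.
have := mind _ hd nz; rewrite /wt.
have sub : [set j | (c1 - c2) 0 j != 0] \subset ~: S.
  apply/subsetP => j; rewrite !inE; apply: contraL => jS; by rewrite !mxE eq // addrN eqxx.
have := subset_leq_card sub; have := cardsC S; rewrite card_ord.
move=> e1 e2 e3; move: HS e1 e2 e3; set x := #|S|; set y := #|~: S|; set z := #|_|; lia.
Qed.

Lemma widen_inj k n (h : (k <= n)%N) : injective (@widen_ord k n h).
Proof. by move=> a b e; apply: val_inj; exact: (congr1 val e). Qed.

Lemma extend (F : finFieldType) (n rho : nat) (C : {set 'rV[F]_n}) :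
  lin_code_nkd (n - rho) (rho + 1) C ->
  forall v : 'rV[F]_(n - rho), exists2 c, c \in C &
    \row_(j < n - rho) c 0 (widen_ord (leq_subr rho n) j) = v.
Proof.
move=> H v.
set W := widen_ord (leq_subr rho n).
set proj := fun c : 'rV[F]_n => \row_(j < n - rho) c 0 (W j).
have inj : {in C &, injective proj}.
  move=> c1 c2 h1 h2 e; apply: (@info _ _ _ _ (W @: setT) H) => //.
    by rewrite card_imset ?cardsT ?card_ord //; apply: widen_inj.
  move=> j /imsetP [j' _ ->].
  by have := e; move/rowP/(_ j'); rewrite /proj !mxE.
have E : proj @: C = setT.
  apply/eqP; rewrite eqEcard subsetT cardsT card_in_imset // card_mx.
  by rewrite /= mul1n; case: H => _ -> _.
have : v \in proj @: C by rewrite E inE.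
by case/imsetP => c hc ->; exists c.
Qed.

Theorem theorem1 (F : finFieldType) (n rho : nat) (C : {set 'rV[F]_n}) :
  (0 < rho)%N -> (rho < n)%N -> (n - 1 <= #|F|)%N ->
  lin_code_nkd (n - rho) (rho + 1) C ->
  [/\ graph_code_linear (code_G1 rho C),
      #|code_G1 rho C| = (#|F| ^ ((n - rho) ^ 2))%N
    & node_erasure_correcting (code_G1 rho C) rho].
Proof.
move=> rho0 rhon _ H.
have H' := H; case: H' => [[C0 Clin] _ _].
set k := (n - rho)%N.
set W := widen_ord (leq_subr rho n).
have cardW : #|W @: [set: 'I_k]| = k.
  by rewrite card_imset ?cardsT ?card_ord //; apply: widen_inj.
have cardW' : (n - rho <= #|W @: [set: 'I_k]|)%N by rewrite cardW.
have memP : forall L, L \in code_G1 rho C ->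
    (forall m : 'I_n, (m < k)%N -> c_in L m \in C) /\ (forall l, c_out L l \in C).
  move=> L; rewrite inE => /andP [/forallP h1 /forallP h2]; split => //.
  by move=> m hm; have := h1 m; rewrite hm.
split.
- split.
    rewrite inE; apply/andP; split; apply/forallP => m.
      by apply/implyP => _; have -> : c_in (0 : 'M[F]_n) m = 0 by rewrite /c_in /c_out; apply/rowP => j; rewrite !mxE.
    by have -> : c_out (0 : 'M[F]_n) m = 0 by rewrite /c_in /c_out; apply/rowP => j; rewrite !mxE.
  move=> a L1 L2 /memP [h11 h12] /memP [h21 h22].
  rewrite inE; apply/andP; split; apply/forallP => m.
    apply/implyP => hm.
    have -> : c_in (a *: L1 + L2) m = a *: c_in L1 m + c_in L2 m
      by rewrite /c_in /c_out; apply/rowP => j; rewrite !mxE.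
    by apply: Clin; [apply: h11 | apply: h21].
  have -> : c_out (a *: L1 + L2) m = a *: c_out L1 m + c_out L2 m
    by rewrite /c_in /c_out; apply/rowP => j; rewrite !mxE.
  by apply: Clin.
- set blk := fun L : 'M[F]_n => \matrix_(i < k, j < k) L (W i) (W j).
  have inj : {in code_G1 rho C &, injective blk}.
    move=> L1 L2 /memP [h11 h12] /memP [h21 h22] e.
    have colE : forall m : 'I_k, c_in L1 (W m) = c_in L2 (W m).
      move=> m; apply: (@info _ _ _ _ (W @: setT) H) => //.
      + by apply: h11; exact: (ltn_ord m).
      + by apply: h21; exact: (ltn_ord m).
      move=> i /imsetP [i' _ ->].
      by have := e; move/matrixP/(_ i' m); rewrite /blk !mxE.
    apply/matrixP => i j.
    have : c_out L1 i = c_out L2 i.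
      apply: (@info _ _ _ _ (W @: setT) H) => //.
      move=> j' /imsetP [j'' _ ->].
      by have := (colE j''); move/rowP/(_ i); rewrite !mxE.
    by move/rowP/(_ j); rewrite !mxE.
  rewrite -(card_in_imset inj).
  have -> : blk @: code_G1 rho C = setT.
    apply/eqP; rewrite eqEsubset subsetT /=; apply/subsetP => A _.
    have [ext extP] : exists ext : 'rV[F]_k -> 'rV[F]_n,
        forall v, ext v \in C /\ \row_(j < k) ext v 0 (W j) = v.
      apply: (@fin_all_exists _ (fun _ => 'rV[F]_n) (fun v c => c \in C /\ \row_(j < k) c 0 (W j) = v)) => v.
      by have [c hc e] := @extend _ _ _ _ H v; exists c.
    pose colv := fun m : 'I_k => ext (\row_i A i m).
    pose w := fun i : 'I_n => \row_(j < k) colv j 0 i.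
    pose L := \matrix_(i < n, j < n) ext (w i) 0 j.
    have extW : forall v (j : 'I_k), ext v 0 (W j) = v 0 j.
      move=> v j; case: (extP v) => _ e.
      by have := e; move/rowP/(_ j); rewrite !mxE.
    apply/imsetP; exists L.
      rewrite inE; apply/andP; split; apply/forallP => m.
        apply/implyP => hm.
        have -> : m = W (Ordinal hm) by apply: val_inj.
        have -> : c_in L (W (Ordinal hm)) = colv (Ordinal hm).
          by rewrite /c_in /c_out; apply/rowP => i; rewrite !mxE extW mxE.
        by case: (extP (\row_i A i (Ordinal hm))).
      have -> : c_out L m = ext (w m) by rewrite /c_in /c_out; apply/rowP => j; rewrite !mxE.
      by case: (extP (w m)).
    apply/matrixP => i j; rewrite /blk !mxE extW !mxE.
    by rewrite /colv extW mxE.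
  by rewrite cardsT card_mx mulnn.
- move=> R cR L1 L2 /memP [h11 h12] /memP [h21 h22] e.
  have cRc : (n - rho <= #|~: R|)%N by have := cardsC R; rewrite card_ord cR; lia.
  have rowE : forall i, i \notin R -> c_out L1 i = c_out L2 i.
    move=> i hi; apply: (@info _ _ _ _ (~: R) H) => // j; rewrite inE => hj.
    by rewrite !mxE e.
  have colE : forall m : 'I_k, c_in L1 (W m) = c_in L2 (W m).
    move=> m; apply: (@info _ _ _ _ (~: R) H) => //.
    + by apply: h11; exact: (ltn_ord m).
    + by apply: h21; exact: (ltn_ord m).
    move=> i; rewrite inE => hi.
    by have := (rowE i hi); move/rowP/(_ (W m)); rewrite !mxE.
  apply/matrixP => i j.
  have : c_out L1 i = c_out L2 i.
    apply: (@info _ _ _ _ (W @: setT) H) => //.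
    move=> j' /imsetP [j'' _ ->].
    by have := (colE j''); move/rowP/(_ i); rewrite !mxE.
  by move/rowP/(_ j); rewrite !mxE.
Qed.
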